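(* Let $M$ be a monoid with identity $1$, and let $R_1=\{f\in M: fM=M\}$ be the $\mathcal{R}$-class of $1$ (the set of elements having a right inverse). If $M-R_1\neq\emptyset$ and $R_1\neq\{1\}$, then $\sigma_m(M)=\sigma_m^*(M)=\sigma_s(M)=2$.
   Context: A subsemigroup is a nonempty subset closed under the operation. For a monoid $M$: a submonoid is a subsemigroup containing the identity of $M$; a monoidal subsemigroup is a subsemigroup that is a monoid in its own right (its identity need not be that of $M$). $\sigma_s(M)$, $\sigma_m(M)$, $\sigma_m^*(M)$ denote the least positive integer $n$ such that $M$ is the union of $n$ proper subsemigroups, proper submonoids, respectively proper monoidal subsemigroups, or $\infty$ if no such finite $n$ exists. *)

(* Defs.v *)
From Stdlib Require Import Arith.

Section MonoidDefs.
Variables (T : Type) (mul : T -> T -> T) (one : T).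

Definition is_subsemigroup (S : T -> Prop) : Prop :=
  (exists x, S x) /\ (forall x y, S x -> S y -> S (mul x y)).

Definition is_submonoid (S : T -> Prop) : Prop :=
  is_subsemigroup S /\ S one.

Definition is_monoidal_subsemigroup (S : T -> Prop) : Prop :=
  is_subsemigroup S /\
  exists e, S e /\ (forall x, S x -> mul e x = x /\ mul x e = x).

Definition proper_subset (S : T -> Prop) : Prop := exists x, ~ S x.

Definition covered_by (P : (T -> Prop) -> Prop) (n : nat) : Prop :=
  exists F : nat -> T -> Prop,
    (forall i, i < n -> P (F i) /\ proper_subset (F i)) /\
    (forall x, exists i, i < n /\ F i x).

Definition sigma_eq (P : (T -> Prop) -> Prop) (n : nat) : Prop :=
  0 < n /\ covered_by P n /\ (forall m, 0 < m -> covered_by P m -> n <= m).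

Definition R1 (f : T) : Prop := forall g, exists h, mul f h = g.

End MonoidDefs.

(* Main.v *)
Require Import Defs.
From Stdlib Require Import Arith Lia Classical_Prop.

Lemma not_cov1 (T : Type) (P : (T -> Prop) -> Prop) : ~ covered_by T P 1.
Proof.
  intros [F [H1 H2]]. destruct (H1 0 ltac:(lia)) as [_ [x Hx]].
  destruct (H2 x) as [i [Hi Hix]]. assert (i = 0) by lia. subst. tauto.
Qed.

Lemma sig2 (T : Type) (P : (T -> Prop) -> Prop) (A B : T -> Prop) :
  P A -> P B -> (exists x, ~ A x) -> (exists x, ~ B x) -> (forall x, A x \/ B x) ->
  sigma_eq T P 2.
Proof.
  intros PA PB nA nB AB. split; [lia|split].
  - exists (fun i => if Nat.eqb i 0 then A else B). split.
    + intros i Hi. destruct i; simpl; auto.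
    + intros x. destruct (AB x); [exists 0 | exists 1]; simpl; split; auto; lia.
  - intros m Hm Hc. destruct m as [|[|m]]; try lia. exfalso; exact (not_cov1 T P Hc).
Qed.

Theorem mainTheorem18 (T : Type) (mul : T -> T -> T) (one : T)
  (mulA : forall x y z, mul x (mul y z) = mul (mul x y) z)
  (mul1x : forall x, mul one x = x)
  (mulx1 : forall x, mul x one = x)
  (hnotR1 : exists x, ~ R1 T mul x)
  (hR1big : exists f, R1 T mul f /\ f <> one) :
  sigma_eq T (is_submonoid T mul one) 2 /\
  sigma_eq T (is_monoidal_subsemigroup T mul) 2 /\
  sigma_eq T (is_subsemigroup T mul) 2.
Proof.
  pose (A := R1 T mul). pose (B := fun x => ~ R1 T mul x \/ x = one).
  assert (SA : is_submonoid T mul one A).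
  { split; [split|].
    - exists one. intros g. exists g. auto.
    - intros x y Hx Hy g. destruct (Hx g) as [u Hu]. destruct (Hy u) as [v Hv].
      exists v. rewrite <- mulA, Hv. exact Hu.
    - intros g; exists g; auto. }
  assert (SB : is_submonoid T mul one B).
  { split; [split|].
    - exists one. right; auto.
    - intros x y [Hx|Hx] Hy.
      + left. intros Hxy. apply Hx. intros g. destruct (Hxy g) as [h Hh].
        exists (mul y h). rewrite mulA. exact Hh.
      + subst x. rewrite mul1x. exact Hy.
    - right; auto. }
  assert (nA : exists x, ~ A x) by exact hnotR1.
  assert (nB : exists x, ~ B x).
  { destruct hR1big as [f [Hf Hf1]]. exists f. intros [H|H]; tauto. }
  assert (AB : forall x, A x \/ B x).
  { intros x. destruct (Classical_Prop.classic (A x)); [left|right; left]; auto. }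
  assert (M : forall S, is_submonoid T mul one S -> is_monoidal_subsemigroup T mul S).
  { intros S [HS H1]. split; auto. exists one. split; auto. }
  split; [|split].
  - apply (sig2 _ _ A B); auto.
  - apply (sig2 _ _ A B); auto.
  - apply (sig2 _ _ A B); auto; [apply SA|apply SB].
Qed.
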